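(* For any finite multiset of items $I$, any item $i\in I$, and any finite sequence of bins $\sigma$, if $p$ is a valid packing of $I$ into $\sigma$, then there is a valid packing of $I\setminus\{i\}$ into $\sigma$ that uses a subset of the bins used by $p$.
   Context: Grid Scheduling setting: items have positive integer sizes; bins have positive integer sizes and form a sequence $\sigma=\langle b_1,\dots,b_m\rangle$. A partial packing assigns some items to bins such that the total size of the items in each bin is at most the bin's size; a packing assigns every item. A bin is used if it receives at least one item. A (partial) packing is valid if each empty bin is smaller than every unpacked item and smaller than every item packed in a bin occurring later in the sequence. *)

(* Defs.v *)
From mathcomp Require Import all_boot.
Set Implicit Arguments. Unset Strict Implicit. Unset Printing Implicit Defensive.

(* Items: a multiset of item sizes, represented as a seq nat (order irrelevant).
   Bins: the sequence sigma = <b_1,...,b_m> of bin sizes, a seq nat; bin j is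
   the j-th entry (0-based), so "later in the sequence" = larger index.
   A partial packing p assigns to the k-th item either None (unpacked) or
   Some j (packed into bin j). *)

Definition load (I : seq nat) (p : seq (option nat)) (j : nat) : nat :=
  \sum_(k < size I | nth None p k == Some j) nth 0 I k.

Definition is_partial_packing (I s : seq nat) (p : seq (option nat)) : Prop :=
  [/\ size p = size I,
      (forall k j, k < size I -> nth None p k = Some j -> j < size s) &
      (forall j, j < size s -> load I p j <= nth 0 s j)].

Definition is_packing (I s : seq nat) (p : seq (option nat)) : Prop :=
  is_partial_packing I s p /\ (forall k, k < size I -> nth None p k <> None).

Definition used (p : seq (option nat)) (j : nat) : bool := Some j \in p.

Definition is_valid (I s : seq nat) (p : seq (option nat)) : Prop :=
  is_partial_packing I s p /\
  forall j, j < size s -> ~~ used p j ->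
    (forall k, k < size I -> nth None p k = None -> nth 0 s j < nth 0 I k) /\
    (forall k j', k < size I -> nth None p k = Some j' -> j < j' ->
        nth 0 s j < nth 0 I k).

Definition is_valid_packing (I s : seq nat) (p : seq (option nat)) : Prop :=
  is_packing I s p /\ is_valid I s p.

(* Main.v *)
Require Import Defs.
From mathcomp Require Import all_boot zify.
From Stdlib Require Import Classical.
Set Implicit Arguments. Unset Strict Implicit.

Lemma sum_swap n k (F G : nat -> nat) : k < n ->
  (forall k', k' != k -> F k' = G k') ->
  \sum_(k' < n) F k' + G k = \sum_(k' < n) G k' + F k.
Proof.
move=> hk H.
have E : \sum_(k' < n | k' != Ordinal hk) F k' = \sum_(k' < n | k' != Ordinal hk) G k'.
  apply: eq_bigr => k' hk'; apply: H; apply: contra hk' => /eqP e; apply/eqP; exact: val_inj.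
rewrite [X in X + G k](bigD1 (Ordinal hk)) //= [X in _ = X + _](bigD1 (Ordinal hk)) //= E. have aux : forall a b c d, b = d -> a + b + c = c + d + a by lia. apply: aux. done.
Qed.

Definition del T r (x : seq T) := take r x ++ drop r.+1 x.

Lemma size_del T r (x : seq T) : r < size x -> size (del r x) = (size x).-1.
Proof. move=> hr; rewrite /del size_cat size_take size_drop hr; lia. Qed.

Lemma nth_del T (x0 : T) r x k : r < size x ->
  nth x0 (del r x) k = nth x0 x (if k < r then k else k.+1).
Proof.
move=> hr; rewrite /del nth_cat size_take hr.
case: ifP => hk; first by rewrite nth_take.
rewrite nth_drop; congr nth; lia.
Qed.

Lemma sum_del n r (G : nat -> nat) : r <= n ->
  \sum_(k < n) G (if k < r then (k:nat) else k.+1) + G r = \sum_(k < n.+1) G k.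
Proof.
move=> hr.
rewrite -(big_mkord xpredT (fun k => G (if k < r then k else k.+1))) -(big_mkord xpredT G).
rewrite (big_cat_nat (leq0n r) hr) /= (big_cat_nat (leq0n r) (leqW hr)) /= big_nat_recl //.
rewrite (@eq_big_nat _ 0 addn 0 r _ (fun k => G k)); last first.
  by move=> k /andP[_ ->].
rewrite (@eq_big_nat _ 0 addn r n _ (fun k => G k.+1)); last first.
  by move=> k /andP[h _]; rewrite ltnNge h.
lia.
Qed.

Lemma load_mk I q a :
  load I q a = \sum_(k < size I) (if nth None q k == Some a then nth 0 I k else 0).
Proof. by rewrite /load big_mkcond. Qed.

Lemma load_del I p r a : r < size I -> size p = size I ->
  load (del r I) (del r p) a <= load I p a.
Proof.
move=> hr hp.
set G := fun k => if nth None p k == Some a then nth 0 I k else 0.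
rewrite !load_mk size_del //.
have hn : size I = (size I).-1.+1 by lia.
rewrite (eq_bigr (fun k : 'I_(size I).-1 => G (if k < r then (k:nat) else k.+1))); last first.
  by move=> k _; rewrite /G !nth_del // hp.
rewrite -/(G _) [X in _ <= X](_ : _ = \sum_(k < (size I).-1.+1) G k); last first.
  by rewrite -hn.
rewrite -(sum_del G (_ : r <= (size I).-1)); [exact: leq_addr | lia].
Qed.

Definition pot (J : seq nat) (q : seq (option nat)) :=
  \sum_(k < size J) odflt 0 (nth None q k).

Definition Inv (J s : seq nat) (p p' q : seq (option nat)) :=
  [/\ size q = size J,
      (forall k, k < size J -> nth None q k != None),
      (forall k a, k < size J -> nth None q k = Some a -> a < size s),
      (forall a, a < size s -> load J q a <= nth 0 s a) &
      ((forall a, used q a -> used p a) /\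
      (forall k a b, k < size J -> nth None q k = Some a -> nth None p' k = Some b -> a <= b))].

Lemma main_ind (J s : seq nat) (p p' : seq (option nat)) :
  (forall k, k < size J -> nth None p' k != None) ->
  (forall k b j, k < size J -> nth None p' k = Some b -> j < size s ->
      ~~ used p j -> j < b -> nth 0 s j < nth 0 J k) ->
  forall m q, pot J q < m -> Inv J s p p' q ->
  exists q', is_valid_packing J s q' /\ (forall j, used q' j -> used p j).
Proof.
move=> Hp'full Hp m; elim: m => [//|m IH] q hpot [hsz hfull hbin hload [hused hmono]].
have hpart : is_partial_packing J s q by split.
case: (classic (exists j k j', [/\ j < size s, ~~ used q j, k < size J,
         nth None q k = Some j' & (j < j') /\ nth 0 J k <= nth 0 s j])); last first.
  move=> Hnot; exists q; split=> //; split.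
    by split=> // k hk; apply/eqP; exact: hfull.
  split=> // j hj hu; split.
    by move=> k hk hN; move: (hfull k hk); rewrite hN.
  move=> k j' hk hq hjj; rewrite ltnNge; apply/negP => hle; apply: Hnot.
  by exists j, k, j'.
move=> [j [k [j' [hj hu hk hq [hjj hle]]]]].
set q' := set_nth None q k (Some j).
have nq' : forall k', nth None q' k' = if k' == k then Some j else nth None q k'.
  by move=> k'; rewrite /q' nth_set_nth /=.
have hsz' : size q' = size q by rewrite /q' size_set_nth; lia.
have husedp : used p j.
  apply/negPn/negP => hnu.
  case eb: (nth None p' k) => [b|]; last by move: (Hp'full k hk); rewrite eb.
  have := hmono _ _ _ hk hq eb => hjb.
  have := Hp _ _ _ hk eb hj hnu (leq_trans hjj hjb); lia.
have off : forall k', k' != k -> nth None q' k' = nth None q k'.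
  by move=> k' /negbTE h; rewrite nq' h.
apply: (IH q').
  have := @sum_swap (size J) k (fun k' => odflt 0 (nth None q' k'))
     (fun k' => odflt 0 (nth None q k')) hk.
  rewrite nq' eqxx hq /= => H; rewrite /pot in hpot *.
  have aux : forall a b c d m, a + c = b + d -> b < m.+1 -> d < c -> a < m by lia.
  exact: aux (H (fun k' hk' => congr1 _ (off k' hk'))) hpot hjj.
split.
- by rewrite hsz'.
- by move=> k' hk'; rewrite nq'; case: ifP => _ //; exact: hfull.
- move=> k' a hk'; rewrite nq'; case: ifP => _; [by case=> <- | exact: hbin].
- move=> a ha.
  have := @sum_swap (size J) k
    (fun k' => if nth None q' k' == Some a then nth 0 J k' else 0)
    (fun k' => if nth None q k' == Some a then nth 0 J k' else 0) hk.
  rewrite -!load_mk nq' eqxx hq => H.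
  have {H} := H (fun k' hk' => ltac:(by rewrite off)).
  case: (eqVneq a j) => [-> | ha'].
  + have -> : load J q j = 0.
      rewrite load_mk big1 // => k' _.
      case: eqP => // e; move: hu; rewrite /used -e mem_nth //.
      by rewrite hsz.
    have -> : (Some j' == Some j) = false by apply/eqP; case; lia.
    rewrite eqxx; lia.
  + have -> : (Some j == Some a) = false by apply/eqP; case=> e; rewrite e eqxx in ha'.
    have := hload a ha; lia.
split.
- move=> a; case: (eqVneq a j) => [-> // | ha] hin.
  have ht : index (Some a) q' < size q' by rewrite index_mem.
  have := nth_index None hin; rewrite nq'.
  case: ifP => [_ [e] | _ e]; first by rewrite e eqxx in ha.
  apply: hused; rewrite /used -e mem_nth //; by rewrite -hsz'.
- move=> k' a b hk'; rewrite nq'; case: ifP => [/eqP -> [<-] eb | _].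
    have := hmono _ _ _ hk hq eb; lia.
  exact: hmono.
Qed.

Theorem lemma1 (I : seq nat) (i : nat) (s : seq nat) (p : seq (option nat)) :
  all (fun x => 0 < x) I -> all (fun b => 0 < b) s ->
  i \in I ->
  is_valid_packing I s p ->
  exists q : seq (option nat),
    is_valid_packing (rem i I) s q /\ (forall j, used q j -> used p j).
Proof.
move=> _ _ hi [[[hsz hbin hload] hfull] [_ hval]].
set r := index i I.
have hr : r < size I by rewrite index_mem.
have hJ : rem i I = del r I by rewrite remE.
have hsJ : size (rem i I) = (size I).-1 by rewrite size_rem.
have hmap : forall k, k < size (rem i I) -> (if k < r then k else k.+1) < size I.
  move=> k; rewrite hsJ; case: ifP => _; lia.
have nJ : forall k, nth 0 (rem i I) k = nth 0 I (if k < r then k else k.+1).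
  by move=> k; rewrite hJ nth_del.
have np : forall k, nth None (del r p) k = nth None p (if k < r then k else k.+1).
  by move=> k; rewrite nth_del // hsz.
have Hfull' : forall k, k < size (rem i I) -> nth None (del r p) k != None.
  by move=> k hk; rewrite np; apply/eqP; apply: hfull; exact: hmap.
apply: (@main_ind (rem i I) s p (del r p) Hfull' _ (pot (rem i I) (del r p)).+1) => //.
  move=> k b j hk hb hj hu hjb; rewrite nJ.
  have [_ H2] := hval j hj hu; apply: (H2 _ b) => //; [exact: hmap | by rewrite -np].
split.
- by rewrite size_del ?hsz ?hsJ.
- exact: Hfull'.
- by move=> k a hk; rewrite np => h; apply: (hbin _ _ (hmap _ hk) h).
- move=> a ha; rewrite hJ; apply: leq_trans (hload a ha).
  by apply: load_del; rewrite ?hsz.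
split.
- move=> a; rewrite /used /del mem_cat => /orP[h|h].
    exact: mem_take h.
  exact: mem_drop h.
- by move=> k a b hk -> [->].
Qed.
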